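(* For every pure context $F$, term $t$ and variable $x\notin\mathrm{fv}(F)$, we have $(\lambda x.F[x])\,t \sim F[t]$.
   Context: The calculus $\lambda_{\mathcal S}$. Terms: $t ::= x \mid \lambda x.t \mid t\,t \mid \mathcal{S}k.t \mid \langle t\rangle$ (shift and reset); values: $v ::= \lambda x.t \mid x$. $\lambda x.t$ binds $x$, $\mathcal{S}k.t$ binds $k$; terms up to $\alpha$-conversion; $\mathrm{fv}$ free variables; capture-avoiding substitution $t\{v/x\}$. Pure contexts $F ::= [\,] \mid v\,F \mid F\,t$; evaluation contexts $E ::= [\,] \mid v\,E \mid E\,t \mid \langle E\rangle$. Reduction: $E[(\lambda x.t)\,v] \to E[t\{v/x\}]$; $E[\langle F[\mathcal{S}k.t]\rangle] \to E[\langle t\{\lambda x.\langle F[x]\rangle/k\}\rangle]$ ($x\notin\mathrm{fv}(F)$); $E[\langle v\rangle]\to E[v]$. $t\Downarrow t'$ iff $t\to^*t'$ and $t'$ irreducible. Normal forms: values, control stuck terms $F[\mathcal{S}k.t]$, open stuck terms $E[x\,v]$. Fresh: not free in the terms/contexts considered. Normal form bisimilarity $\sim$: for a relation $\mathcal R$ on terms, $E_0\mathrel{\mathcal R}E_1$ iff either $E_0=E_0'[\langle F_0\rangle]$, $E_1=E_1'[\langle F_1\rangle]$ ($F_i$ pure) with $E_0'[x]\mathrel{\mathcal R}E_1'[x]$ and $\langle F_0[x]\rangle\mathrel{\mathcal R}\langle F_1[x]\rangle$ ($x$ fresh), or $E_0=F_0$, $E_1=F_1$ pure with $F_0[x]\mathrel{\mathcal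 R}F_1[x]$ ($x$ fresh). $v\mathbin{@}y$ is $x\,y$ if $v=x$, $t\{y/x\}$ if $v=\lambda x.t$. $\mathcal R^{\mathrm{nf}}$ on normal forms: $v_0\mathrel{\mathcal R^{\mathrm{nf}}}v_1$ if $v_0\mathbin{@}x\mathrel{\mathcal R}v_1\mathbin{@}x$ ($x$ fresh); $F_0[\mathcal{S}k.t_0]\mathrel{\mathcal R^{\mathrm{nf}}}F_1[\mathcal{S}k.t_1]$ if $F_0\mathrel{\mathcal R}F_1$ and $\langle t_0\rangle\mathrel{\mathcal R}\langle t_1\rangle$; $E_0[x\,v_0]\mathrel{\mathcal R^{\mathrm{nf}}}E_1[x\,v_1]$ if $E_0\mathrel{\mathcal R}E_1$ and $v_0\mathrel{\mathcal R^{\mathrm{nf}}}v_1$. $\mathcal R$ is a normal form simulation if $t_0\mathrel{\mathcal R}t_1$ and $t_0\Downarrow t_0'$ imply $t_1\Downarrow t_1'$ with $t_0'\mathrel{\mathcal R^{\mathrm{nf}}}t_1'$; a bisimulation if $\mathcal R$ and $\mathcal R^{-1}$ are simulations; $\sim$ is the largest normal form bisimulation. *)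

(* Defs.v *)
(* The calculus lambda_S (shift/reset) in locally nameless
   representation: bound variables are de Bruijn indices (BVar), free
   variables are named atoms (FVar, atoms = nat).  Terms up to alpha-conversion
   correspond to locally closed raw terms. *)
From Stdlib Require Import List Arith Relations.
Import ListNotations.

Definition atom := nat.

Inductive term : Type :=
| BVar  : nat -> term
| FVar  : atom -> term
| Lam   : term -> term
| App   : term -> term -> term
| Shift : term -> term           (* S k.t ; body binds index 0 (= k) *)
| Reset : term -> term.

Fixpoint open_rec (k : nat) (u : term) (t : term) : term :=
  match t with
  | BVar n => if Nat.eqb n k then u else BVar n
  | FVar x => FVar x
  | Lam b => Lam (open_rec (S k) u b)
  | App a b => App (open_rec k u a) (open_rec k u b)
  | Shift b => Shift (open_rec (S k) u b)
  | Reset b => Reset (open_rec k u b)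
  end.
Definition open (t u : term) : term := open_rec 0 u t.

Fixpoint close_rec (k : nat) (x : atom) (t : term) : term :=
  match t with
  | BVar n => BVar n
  | FVar y => if Nat.eqb y x then BVar k else FVar y
  | Lam b => Lam (close_rec (S k) x b)
  | App a b => App (close_rec k x a) (close_rec k x b)
  | Shift b => Shift (close_rec (S k) x b)
  | Reset b => Reset (close_rec k x b)
  end.
Definition close (x : atom) (t : term) : term := close_rec 0 x t.

Definition lam (x : atom) (t : term) : term := Lam (close x t).

Fixpoint fv (t : term) : list atom :=
  match t with
  | BVar _ => []
  | FVar x => [x]
  | Lam b | Shift b | Reset b => fv b
  | App a b => fv a ++ fv b
  end.

Fixpoint lc_at (k : nat) (t : term) : Prop :=
  match t with
  | BVar n => n < k
  | FVar _ => True
  | Lam b | Shift b => lc_at (S k) b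
  | App a b => lc_at k a /\ lc_at k b
  | Reset b => lc_at k b
  end.
Definition lc (t : term) : Prop := lc_at 0 t.

Definition is_val (t : term) : Prop :=
  match t with
  | Lam _ | FVar _ => True
  | _ => False
  end.

Inductive ctx : Type :=
| CHole : ctx
| CAppR : term -> ctx -> ctx
| CAppL : ctx -> term -> ctx
| CReset : ctx -> ctx.

Fixpoint plug (E : ctx) (t : term) : term :=
  match E with
  | CHole => t
  | CAppR v E' => App v (plug E' t)
  | CAppL E' u => App (plug E' t) u
  | CReset E' => Reset (plug E' t)
  end.

Fixpoint comp (E1 E2 : ctx) : ctx :=
  match E1 with
  | CHole => E2
  | CAppR v E' => CAppR v (comp E' E2)
  | CAppL E' u => CAppL (comp E' E2) u
  | CReset E' => CReset (comp E' E2)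
  end.

Fixpoint fv_ctx (E : ctx) : list atom :=
  match E with
  | CHole => []
  | CAppR v E' => fv v ++ fv_ctx E'
  | CAppL E' u => fv_ctx E' ++ fv u
  | CReset E' => fv_ctx E'
  end.

Fixpoint ectx (E : ctx) : Prop :=
  match E with
  | CHole => True
  | CAppR v E' => is_val v /\ ectx E'
  | CAppL E' _ => ectx E'
  | CReset E' => ectx E'
  end.

Fixpoint pure (F : ctx) : Prop :=
  match F with
  | CHole => True
  | CAppR v F' => is_val v /\ pure F'
  | CAppL F' _ => pure F'
  | CReset _ => False
  end.

Inductive step : term -> term -> Prop :=
| step_beta : forall E b v, ectx E -> is_val v ->
    step (plug E (App (Lam b) v)) (plug E (open b v))
| step_shift : forall E F b, ectx E -> pure F ->
    (* E[<F[S k.b]>] -> E[< b{ \x.<F[x]> / k } >] *)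
    step (plug E (Reset (plug F (Shift b))))
         (plug E (Reset (open b (Lam (Reset (plug F (BVar 0)))))))
| step_reset : forall E v, ectx E -> is_val v ->
    step (plug E (Reset v)) (plug E v).

Definition irreducible (t : term) : Prop := ~ exists t', step t t'.

Definition evalto (t t' : term) : Prop :=
  clos_refl_trans term step t t' /\ irreducible t'.

Definition fresh (x : atom) (l : list atom) : Prop := ~ In x l.

Definition app_at (v : term) (x : atom) : term :=
  match v with
  | Lam b => open b (FVar x)
  | _ => App v (FVar x)
  end.

Definition trel := term -> term -> Prop.

Definition ctx_rel (R : trel) (E0 E1 : ctx) : Prop :=
  (exists E0' F0 E1' F1,
      ectx E0' /\ pure F0 /\ ectx E1' /\ pure F1 /\
      E0 = comp E0' (CReset F0) /\ E1 = comp E1' (CReset F1) /\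
      (forall x, fresh x (fv_ctx E0 ++ fv_ctx E1) ->
         R (plug E0' (FVar x)) (plug E1' (FVar x)) /\
         R (Reset (plug F0 (FVar x))) (Reset (plug F1 (FVar x)))))
  \/
  (pure E0 /\ pure E1 /\
   forall x, fresh x (fv_ctx E0 ++ fv_ctx E1) ->
     R (plug E0 (FVar x)) (plug E1 (FVar x))).

Definition val_rel (R : trel) (v0 v1 : term) : Prop :=
  is_val v0 /\ is_val v1 /\
  forall x, fresh x (fv v0 ++ fv v1) -> R (app_at v0 x) (app_at v1 x).

Definition nf_rel (R : trel) (n0 n1 : term) : Prop :=
  val_rel R n0 n1
  \/
  (exists F0 b0 F1 b1,
      pure F0 /\ pure F1 /\
      n0 = plug F0 (Shift b0) /\ n1 = plug F1 (Shift b1) /\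
      ctx_rel R F0 F1 /\
      (forall k, fresh k (fv n0 ++ fv n1) ->
         R (Reset (open b0 (FVar k))) (Reset (open b1 (FVar k)))))
  \/
  (exists E0 E1 x v0 v1,
      ectx E0 /\ ectx E1 /\
      n0 = plug E0 (App (FVar x) v0) /\ n1 = plug E1 (App (FVar x) v1) /\
      ctx_rel R E0 E1 /\ val_rel R v0 v1).

Definition nf_simulation (R : trel) : Prop :=
  forall t0 t1, R t0 t1 -> forall t0', evalto t0 t0' ->
    exists t1', evalto t1 t1' /\ nf_rel R t0' t1'.

Definition nf_bisimulation (R : trel) : Prop :=
  nf_simulation R /\ nf_simulation (fun a b => R b a).

Definition nf_bisim (t0 t1 : term) : Prop :=
  exists R, nf_bisimulation R /\ R t0 t1.

(* Main.v *)
Require Import Defs.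
From Stdlib Require Import List Arith Lia Relations Classical Wf_nat.
Import ListNotations.

Fixpoint lcctx (k : nat) (E : ctx) : Prop :=
  match E with
  | CHole => True
  | CAppR v E' => lc_at k v /\ lcctx k E'
  | CAppL E' u => lcctx k E' /\ lc_at k u
  | CReset E' => lcctx k E'
  end.

Lemma plug_comp : forall E1 E2 t, plug (comp E1 E2) t = plug E1 (plug E2 t).
Proof. induction E1; simpl; intros; f_equal; auto. Qed.

Lemma comp_assoc : forall A B C, comp (comp A B) C = comp A (comp B C).
Proof. induction A; simpl; intros; f_equal; auto. Qed.

Lemma lc_plug : forall E k t, lc_at k (plug E t) <-> lcctx k E /\ lc_at k t.
Proof. induction E; simpl; intros; try rewrite IHE; tauto. Qed.

Lemma lc_at_mono : forall t k j, lc_at k t -> k <= j -> lc_at j t.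
Proof. induction t; simpl; intros; try tauto; try lia.
  - apply (IHt (S k)); auto; lia.
  - split; [apply (IHt1 k)|apply (IHt2 k)]; tauto.
  - apply (IHt (S k)); auto; lia.
  - apply (IHt k); auto.
Qed.

Lemma lcctx_mono : forall E k j, lcctx k E -> k <= j -> lcctx j E.
Proof. induction E; simpl; intros; try tauto.
  - split; [apply (lc_at_mono _ k)|apply (IHE k)]; tauto.
  - split; [apply (IHE k)|apply (lc_at_mono _ k)]; tauto.
  - apply (IHE k); auto.
Qed.

Lemma open_lc : forall t k j u, lc_at k t -> k <= j -> open_rec j u t = t.
Proof. induction t; simpl; intros; f_equal; try tauto.
  - destruct (Nat.eqb_spec n j); auto; lia.
  - apply (IHt (S k)); auto; lia.
  - apply (IHt1 k); tauto.
  - apply (IHt2 k); tauto.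
  - apply (IHt (S k)); auto; lia.
  - apply (IHt k); auto.
Qed.

Lemma open_plug : forall E k u t, lcctx 0 E ->
  open_rec k u (plug E t) = plug E (open_rec k u t).
Proof. induction E; simpl; intros; f_equal; try tauto.
  - apply (open_lc _ 0); [tauto|lia].
  - apply IHE; tauto.
  - apply IHE; tauto.
  - apply (open_lc _ 0); [tauto|lia].
  - apply IHE; tauto.
Qed.

Lemma close_notin : forall t k x, ~ In x (fv t) -> close_rec k x t = t.
Proof. induction t; simpl; intros; f_equal; auto.
  - destruct (Nat.eqb_spec a x); subst; auto. exfalso; auto.
  - apply IHt1; intro; apply H; apply in_app_iff; auto.
  - apply IHt2; intro; apply H; apply in_app_iff; auto.
Qed.

Lemma close_plug : forall E k x t, ~ In x (fv_ctx E) ->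
  close_rec k x (plug E t) = plug E (close_rec k x t).
Proof. induction E; simpl; intros; f_equal; auto.
  - apply close_notin; intro; apply H; apply in_app_iff; auto.
  - apply IHE; intro; apply H; apply in_app_iff; auto.
  - apply IHE; intro; apply H; apply in_app_iff; auto.
  - apply close_notin; intro; apply H; apply in_app_iff; auto.
Qed.

Lemma close_lc : forall t k x, lc_at k t -> lc_at (S k) (close_rec k x t).
Proof. induction t; simpl; intros; auto; try lia; try tauto.
  destruct (Nat.eqb_spec a x); simpl; auto.
  destruct H; split; auto.
Qed.

Lemma open_lc_at : forall t k u, lc_at (S k) t -> lc_at k u -> lc_at k (open_rec k u t).
Proof. induction t; simpl; intros; try tauto.
  - destruct (Nat.eqb_spec n k); auto. simpl; lia.
  - apply IHt; auto. apply (lc_at_mono _ k); auto.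
  - split; [apply IHt1|apply IHt2]; tauto.
  - apply IHt; auto. apply (lc_at_mono _ k); auto.
  - apply IHt; auto.
Qed.

Inductive sstep : term -> term -> Prop :=
| sbeta : forall b v, is_val v -> sstep (App (Lam b) v) (open b v)
| sreset : forall v, is_val v -> sstep (Reset v) v
| sshift : forall F b, pure F ->
    sstep (Reset (plug F (Shift b))) (Reset (open b (Lam (Reset (plug F (BVar 0))))))
| sappL : forall t t' u, sstep t t' -> sstep (App t u) (App t' u)
| sappR : forall v t t', is_val v -> sstep t t' -> sstep (App v t) (App v t')
| sresetc : forall t t', sstep t t' -> sstep (Reset t) (Reset t').

Lemma sstep_ctx : forall E t t', ectx E -> sstep t t' -> sstep (plug E t) (plug E t').
Proof. induction E; simpl; intros; auto.
  - destruct H; apply sappR; auto.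
  - apply sappL; auto.
  - apply sresetc; auto.
Qed.

Lemma step_sstep : forall t t', step t t' <-> sstep t t'.
Proof. split.
  - intros H; destruct H; apply sstep_ctx; auto; constructor; auto.
  - induction 1.
    + apply (step_beta CHole); simpl; auto.
    + apply (step_reset CHole); simpl; auto.
    + apply (step_shift CHole); simpl; auto.
    + inversion IHsstep; subst.
      * apply (step_beta (CAppL E u)); auto.
      * apply (step_shift (CAppL E u)); auto.
      * apply (step_reset (CAppL E u)); auto.
    + inversion IHsstep; subst.
      * apply (step_beta (CAppR v E)); simpl; auto.
      * apply (step_shift (CAppR v E)); simpl; auto.
      * apply (step_reset (CAppR v E)); simpl; auto.
    + inversion IHsstep; subst.
      * apply (step_beta (CReset E)); auto.
      * apply (step_shift (CReset E)); auto.
      * apply (step_reset (CReset E)); auto.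
Qed.

Lemma val_nostep : forall v t, is_val v -> ~ sstep v t.
Proof. intros v t H S; destruct v; simpl in H; try tauto; inversion S. Qed.

Lemma plug_shift_notval : forall F b, ~ is_val (plug F (Shift b)).
Proof. destruct F; simpl; auto. Qed.

Ltac kill := match goal with
 | H : is_val (plug _ (Shift _)) |- _ => exfalso; eapply plug_shift_notval; exact H
 | H : sstep ?v _, V : is_val ?v |- _ => exfalso; eapply val_nostep; [exact V|exact H]
 | H : sstep (Lam _) _ |- _ => inversion H
 | H : sstep (FVar _) _ |- _ => inversion H
 end.

Lemma plug_shift_nostep : forall F b t, pure F -> ~ sstep (plug F (Shift b)) t.
Proof. induction F; simpl; intros b t0 HF S.
  - inversion S.
  - destruct HF; inversion S; subst; try kill.
    eapply IHF; eauto.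
  - inversion S; subst; try kill.
    + destruct F; discriminate.
    + eapply IHF; eauto.
  - tauto.
Qed.

Ltac kill2 := first [kill | match goal with
 | H : sstep (plug ?F (Shift _)) _, P : pure ?F |- _ => exfalso; eapply plug_shift_nostep; [exact P|exact H] end].

Lemma plug_shift_inj : forall F F0 b b0, pure F -> pure F0 ->
  plug F0 (Shift b0) = plug F (Shift b) -> F0 = F /\ b0 = b.
Proof. induction F; intros F0 b b0 P P0 Heq; destruct F0; simpl in *; try discriminate; try tauto.
  - injection Heq; intros; subst; auto.
  - injection Heq; intros H1 H2; subst. destruct (IHF F0 b b0); try tauto. subst; auto.
  - injection Heq; intros H1 H2; subst. exfalso; eapply plug_shift_notval; apply P.
  - injection Heq; intros H1 H2; subst. exfalso; eapply plug_shift_notval; apply P0.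
  - injection Heq; intros H1 H2; subst. destruct (IHF F0 b b0); try tauto. subst; auto.
Qed.

Lemma sstep_det : forall t t1, sstep t t1 -> forall t2, sstep t t2 -> t1 = t2.
Proof. induction 1; intros t2 S2; inversion S2; subst; try kill2; auto; f_equal; auto.
  destruct (plug_shift_inj F F0 b b0); auto; subst; auto. Qed.

Definition nfform (t : term) : Prop :=
  is_val t \/ (exists F b, pure F /\ t = plug F (Shift b)) \/
  (exists E y v, ectx E /\ is_val v /\ t = plug E (App (FVar y) v)).

Lemma classify : forall t, lc_at 0 t -> (exists t', sstep t t') \/ nfform t.
Proof. unfold nfform. induction t; simpl; intros H.
  - lia.
  - right; left; simpl; auto.
  - right; left; simpl; auto.
  - destruct H as [H1 H2].
    destruct (IHt1 H1) as [[t' S]|[V|[[F [b [P E]]]|[E [y [v [P [V E']]]]]]]].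
    + left; eexists; apply sappL; eauto.
    + destruct (IHt2 H2) as [[t' S]|[V2|[[F [b [P E]]]|[E [y [v [P [V2 E']]]]]]]].
      * left; eexists; apply sappR; eauto.
      * destruct t1; simpl in V; try tauto.
        -- right; right; right. exists CHole, a, t2; simpl; auto.
        -- left; eexists; apply sbeta; auto.
      * right; right; left. exists (CAppR t1 F), b; subst; simpl; auto.
      * right; right; right. exists (CAppR t1 E), y, v; subst; simpl; auto.
    + right; right; left. exists (CAppL F t2), b; subst; simpl; auto.
    + right; right; right. exists (CAppL E t2), y, v; subst; simpl; auto.
  - right; right; left. exists CHole, t; simpl; auto.
  - destruct (IHt H) as [[t' S]|[V|[[F [b [P E]]]|[E [y [v [P [V E']]]]]]]].
    + left; eexists; apply sresetc; eauto.
    + left; eexists; apply sreset; eauto.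
    + left; subst; eexists; apply sshift; eauto.
    + right; right; right. exists (CReset E), y, v; subst; simpl; auto.
Qed.

Lemma ostuck_notval : forall E y v, ~ is_val (plug E (App (FVar y) v)).
Proof. destruct E; simpl; auto. Qed.

Lemma ostuck_neq_shift : forall E y v F b, ectx E -> is_val v -> pure F ->
  plug E (App (FVar y) v) <> plug F (Shift b).
Proof. induction E; intros y v F b HE V P Heq; destruct F; simpl in *; try discriminate; try tauto;
  injection Heq; intros; subst;
  repeat match goal with H : _ /\ _ |- _ => destruct H end;
  try solve [ eapply IHE; [ | | | eassumption]; tauto
            | eapply plug_shift_notval; eassumption
            | eapply ostuck_notval; eassumption ].
  destruct F; discriminate.
Qed.

Lemma ostuck_nostep : forall E y v t, ectx E -> is_val v ->
  ~ sstep (plug E (App (FVar y) v)) t.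
Proof. induction E; simpl; intros y v t0 HE V S;
  repeat match goal with H : _ /\ _ |- _ => destruct H end;
  inversion S; subst; try kill;
  try solve [ eapply IHE; [| | eassumption]; assumption
            | eapply ostuck_notval; eassumption
            | match goal with H : _ = plug ?X (App _ _) |- _ => destruct X; simpl in H; discriminate end
            | eapply ostuck_neq_shift; [ | | | eassumption]; eauto
            | eapply ostuck_neq_shift; [ | | | symmetry; eassumption]; eauto ].
Qed.

Lemma nf_nostep : forall t t', nfform t -> ~ sstep t t'.
Proof. intros t t' [V|[[F [b [P E]]]|[E [y [v [P [V E']]]]]]]; subst.
  - apply val_nostep; auto.
  - apply plug_shift_nostep; auto.
  - apply ostuck_nostep; auto.
Qed.

Lemma sstep_lc : forall t t', sstep t t' -> lc_at 0 t -> lc_at 0 t'.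
Proof. induction 1; simpl; intros H'; try tauto.
  - apply open_lc_at; tauto.
  - apply lc_plug in H'; simpl in H'.
    apply open_lc_at; try tauto. simpl. apply lc_plug; simpl; split; [|lia].
    apply (lcctx_mono _ 0); auto; tauto.
Qed.

Inductive sim (cF : term) (K : ctx) : nat -> term -> term -> Prop :=
| s_bvar : forall n, sim cF K 0 (BVar n) (BVar n)
| s_fvar : forall a, sim cF K 0 (FVar a) (FVar a)
| s_lam : forall n a b, sim cF K n a b -> sim cF K n (Lam a) (Lam b)
| s_app : forall n m k a a' b b', sim cF K n a b -> sim cF K m a' b' -> k = n + m ->
    sim cF K k (App a a') (App b b')
| s_shift : forall n a b, sim cF K n a b -> sim cF K n (Shift a) (Shift b)
| s_reset : forall n a b, sim cF K n a b -> sim cF K n (Reset a) (Reset b)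
| s_red : forall n a b, sim cF K n a b -> sim cF K (S n) (App (Lam cF) a) (plug K b).

Definition good cF K := lc_at 1 cF /\ lcctx 0 K /\ pure K /\ (forall v, open cF v = plug K v).

Lemma sim_refl : forall cF K t, sim cF K 0 t t.
Proof. induction t; try constructor; auto. eapply s_app; eauto. Qed.

Lemma sim_plug : forall cF K E n a b, sim cF K n a b -> sim cF K n (plug E a) (plug E b).
Proof. induction E; simpl; intros; auto.
  - eapply s_app; [apply sim_refl| eauto | auto].
  - eapply s_app; [eauto | apply sim_refl | lia].
  - constructor; auto.
Qed.

Lemma sim_lc : forall cF K, good cF K -> forall n a b, sim cF K n a b ->
  forall k, lc_at k a <-> lc_at k b.
Proof. intros cF K [G1 [G2 [G3 G4]]]. induction 1; simpl; intros k0;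
  try (rewrite IHsim1, IHsim2); try rewrite IHsim; try tauto.
  rewrite lc_plug, <- IHsim. split; try tauto. intros H'; split; [|tauto].
    apply (lcctx_mono _ 0); auto; lia.
  intros [_ H']; split; auto. apply (lc_at_mono _ 1); auto; lia.
Qed.

Lemma sim_open : forall cF K, good cF K -> forall n a b, sim cF K n a b ->
  forall m u v, sim cF K m u v -> forall k, exists p, sim cF K p (open_rec k u a) (open_rec k v b).
Proof. intros cF K HG. induction 1; simpl; intros m0 u v Huv k0.
  - destruct (Nat.eqb n k0); eauto. exists 0; constructor.
  - exists 0; constructor.
  - destruct (IHsim m0 u v Huv (S k0)) as [p Hp]. exists p; constructor; auto.
  - destruct (IHsim1 m0 u v Huv k0) as [p Hp]. destruct (IHsim2 m0 u v Huv k0) as [q Hq].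
    exists (p+q); eapply s_app; eauto.
  - destruct (IHsim m0 u v Huv (S k0)) as [p Hp]. exists p; constructor; auto.
  - destruct (IHsim m0 u v Huv k0) as [p Hp]. exists p; constructor; auto.
  - destruct HG as [G1 [G2 [G3 G4]]].
    destruct (IHsim m0 u v Huv k0) as [p Hp]. exists (S p).
    rewrite (open_lc cF 1 (S k0)); auto; try lia.
    rewrite open_plug; auto. constructor; auto.
Qed.

Lemma sim_val : forall cF K, good cF K -> forall n v t, sim cF K n v t -> is_val v ->
  is_val t /\ forall y, exists p, sim cF K p (app_at v y) (app_at t y).
Proof. intros cF K HG n v t H V. destruct v; simpl in V; try tauto; inversion H; subst; simpl.
  - split; auto. intros y. exists 0. apply sim_refl.
  - split; auto. intros y. unfold open. eapply sim_open; eauto. apply sim_refl.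
Qed.

Definition pc cF K (A B : ctx) := forall m a b, sim cF K m a b -> exists q, sim cF K q (plug A a) (plug B b).

Lemma pc_refl_hole : forall cF K, pc cF K CHole CHole.
Proof. unfold pc; simpl; eauto. Qed.

Lemma cstuck_sim : forall cF K, good cF K -> forall F0 n b0 t1, pure F0 ->
  sim cF K n (plug F0 (Shift b0)) t1 ->
  exists F1 b1 p, pure F1 /\ t1 = plug F1 (Shift b1) /\ sim cF K p b0 b1 /\ pc cF K F0 F1.
Proof. intros cF K HG. induction F0; simpl; intros n b0 t1 P H.
  - inversion H; subst. exists CHole, b, n; simpl; repeat split; auto. apply pc_refl_hole.
  - destruct P as [V P]. inversion H; subst.
    + match goal with Hs : sim _ _ _ (plug F0 _) _ |- _ => destruct (IHF0 _ _ _ P Hs) as [F1 [b1 [p [P1 [E1 [S1 C1]]]]]] end. subst.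
      exists (CAppR b F1), b1, p; simpl; repeat split; auto.
      * destruct (sim_val _ _ HG _ _ _ H2 V); auto.
      * intros mm aa bb Hab. destruct (C1 mm aa bb Hab) as [q Hq]. eexists; simpl; eapply s_app; [eauto|eauto|reflexivity].
    + match goal with Hs : sim _ _ _ (plug F0 _) _ |- _ => destruct (IHF0 _ _ _ P Hs) as [F1 [b1 [p [P1 [E1 [S1 C1]]]]]] end. subst.
      exists (comp K F1), b1, p; rewrite plug_comp; repeat split; auto.
      * destruct HG as [_ [_ [PK _]]]. clear -PK P1. induction K; simpl in *; tauto.
      * intros mm aa bb Hab. destruct (C1 mm aa bb Hab) as [q Hq]. exists (S q). rewrite plug_comp; simpl; constructor; auto.
  - inversion H; subst.
    + match goal with Hs : sim _ _ _ (plug F0 _) _ |- _ => destruct (IHF0 _ _ _ P Hs) as [F1 [b1 [p [P1 [E1 [S1 C1]]]]]] end. subst.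
      exists (CAppL F1 b'), b1, p; simpl; repeat split; auto.
      intros mm aa bb Hab. destruct (C1 mm aa bb Hab) as [q Hq]. eexists; simpl; eapply s_app; [eauto|eauto|reflexivity].
    + destruct F0; discriminate.
  - tauto.
Qed.

Definition Qc cF K E0 E1 :=
  (pure E0 /\ pure E1 /\ pc cF K E0 E1) \/
  (exists E0' F0 E1' F1, ectx E0' /\ pure F0 /\ ectx E1' /\ pure F1 /\
     E0 = comp E0' (CReset F0) /\ E1 = comp E1' (CReset F1) /\ pc cF K E0' E1' /\ pc cF K F0 F1).

Lemma pure_ectx : forall F, pure F -> ectx F.
Proof. induction F; simpl; tauto. Qed.

Lemma pure_comp : forall A B, pure A -> pure B -> pure (comp A B).
Proof. induction A; simpl; intuition auto. Qed.

Lemma ectx_comp : forall A B, ectx A -> ectx B -> ectx (comp A B).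
Proof. induction A; simpl; intuition auto. Qed.

Lemma ostuck_sim : forall cF K, good cF K -> forall E0 n y v0 t1, ectx E0 -> is_val v0 ->
  sim cF K n (plug E0 (App (FVar y) v0)) t1 ->
  exists E1 v1 p, ectx E1 /\ is_val v1 /\ t1 = plug E1 (App (FVar y) v1) /\
    sim cF K p v0 v1 /\ Qc cF K E0 E1.
Proof. intros cF K HG. pose proof HG as [G1 [G2 [G3 G4]]].
  induction E0; simpl; intros n y v0 t1 HE V H.
  - inversion H; subst. inversion H2; subst.
    exists CHole, b', m; simpl; repeat split; auto.
    + destruct (sim_val _ _ HG _ _ _ H4 V); auto.
    + left; simpl; repeat split; auto. apply pc_refl_hole.
  - destruct HE as [Vt HE]. inversion H; subst.
    + match goal with Hs : sim _ _ _ (plug E0 _) _ |- _ => destruct (IHE0 _ _ _ _ HE V Hs) as [E1 [v1 [p [HE1 [V1 [Et [S1 Q1]]]]]]] end. subst.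
      assert (Vb : is_val b). { match goal with Hs : sim _ _ _ t b |- _ => destruct (sim_val _ _ HG _ _ _ Hs Vt); auto end. }
      exists (CAppR b E1), v1, p; simpl; repeat split; auto.
      destruct Q1 as [[P0 [P1 C1]]|[E0' [F0 [E1' [F1 [HE0' [P0 [HE1' [P1 [Eq0 [Eq1 [C1 C2]]]]]]]]]]]].
      * left; simpl; repeat split; auto. intros mm aa bb Hab. destruct (C1 mm aa bb Hab) as [q Hq].
        eexists; simpl; eapply s_app; [eauto|eauto|reflexivity].
      * right. exists (CAppR t E0'), F0, (CAppR b E1'), F1; subst; simpl; repeat split; auto.
        intros mm aa bb Hab. destruct (C1 mm aa bb Hab) as [q Hq].
        eexists; simpl; eapply s_app; [eauto|eauto|reflexivity].
    + match goal with Hs : sim _ _ _ (plug E0 _) _ |- _ => destruct (IHE0 _ _ _ _ HE V Hs) as [E1 [v1 [p [HE1 [V1 [Et [S1 Q1]]]]]]] end. subst.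
      exists (comp K E1), v1, p; rewrite plug_comp; repeat split; auto.
      * apply ectx_comp; auto. apply pure_ectx; auto.
      * destruct Q1 as [[P0 [P1 C1]]|[E0' [F0 [E1' [F1 [HE0' [P0 [HE1' [P1 [Eq0 [Eq1 [C1 C2]]]]]]]]]]]].
        -- left; simpl; repeat split; auto. apply pure_comp; auto.
           intros mm aa bb Hab. destruct (C1 mm aa bb Hab) as [q Hq].
           exists (S q); rewrite plug_comp; constructor; auto.
        -- right. exists (CAppR (Lam cF) E0'), F0, (comp K E1'), F1; subst; simpl; repeat split; auto.
           ++ apply ectx_comp; auto. apply pure_ectx; auto.
           ++ rewrite comp_assoc; auto.
           ++ intros mm aa bb Hab. destruct (C1 mm aa bb Hab) as [q Hq].
              exists (S q); rewrite plug_comp; constructor; auto.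
  - inversion H; subst.
    + match goal with Hs : sim _ _ _ (plug E0 _) _ |- _ => destruct (IHE0 _ _ _ _ HE V Hs) as [E1 [v1 [p [HE1 [V1 [Et [S1 Q1]]]]]]] end. subst.
      exists (CAppL E1 b'), v1, p; simpl; repeat split; auto.
      destruct Q1 as [[P0 [P1 C1]]|[E0' [F0 [E1' [F1 [HE0' [P0 [HE1' [P1 [Eq0 [Eq1 [C1 C2]]]]]]]]]]]].
      * left; simpl; repeat split; auto. intros mm aa bb Hab. destruct (C1 mm aa bb Hab) as [q Hq].
        eexists; simpl; eapply s_app; [eauto|eauto|reflexivity].
      * right. exists (CAppL E0' t), F0, (CAppL E1' b'), F1; subst; simpl; repeat split; auto.
        intros mm aa bb Hab. destruct (C1 mm aa bb Hab) as [q Hq].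
        eexists; simpl; eapply s_app; [eauto|eauto|reflexivity].
    + destruct E0; discriminate.
  - inversion H; subst.
    match goal with Hs : sim _ _ _ (plug E0 _) _ |- _ => destruct (IHE0 _ _ _ _ HE V Hs) as [E1 [v1 [p [HE1 [V1 [Et [S1 Q1]]]]]]] end. subst.
    exists (CReset E1), v1, p; simpl; repeat split; auto.
    right.
    destruct Q1 as [[P0 [P1 C1]]|[E0' [F0 [E1' [F1 [HE0' [P0 [HE1' [P1 [Eq0 [Eq1 [C1 C2]]]]]]]]]]]].
    + exists CHole, E0, CHole, E1; simpl; repeat split; auto. apply pc_refl_hole.
    + exists (CReset E0'), F0, (CReset E1'), F1; subst; simpl; repeat split; auto.
      intros mm aa bb Hab. destruct (C1 mm aa bb Hab) as [q Hq].
      exists q; constructor; auto.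
Qed.

Lemma sstep_pure : forall F t t', pure F -> sstep t t' -> sstep (plug F t) (plug F t').
Proof. intros; apply sstep_ctx; auto; apply pure_ectx; auto. Qed.

Lemma sim_step : forall cF K, good cF K -> forall t0 t0', sstep t0 t0' -> forall n t1, sim cF K n t0 t1 ->
  (exists t1' p, sstep t1 t1' /\ sim cF K p t0' t1') \/ (exists m, m < n /\ sim cF K m t0' t1).
Proof. intros cF K HG. pose proof HG as [G1 [G2 [G3 G4]]].
  induction 1; intros n t1 H'.
  -
    inversion H'; subst.
    + inversion H2; subst. left. destruct (sim_val _ _ HG _ _ _ H4 H) as [Vb' _].
      destruct (sim_open _ _ HG _ _ _ H3 _ _ _ H4 0) as [p Hp].
      exists (open b1 b'), p; split; [apply sbeta; auto|exact Hp].
    + right. exists n0; split; [lia|]. rewrite G4. apply sim_plug; auto.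
  -
    inversion H'; subst. left. destruct (sim_val _ _ HG _ _ _ H2 H) as [Vb _].
    exists b, n; split; [apply sreset; auto|auto].
  -
    inversion H'; subst.
    destruct (cstuck_sim _ _ HG _ _ _ _ H H2) as [F1 [b1 [p [P1 [E1 [S1 C1]]]]]]. subst.
    left. destruct (C1 0 (BVar 0) (BVar 0) (s_bvar _ _ 0)) as [q Hq].
    assert (Hl : sim cF K q (Lam (Reset (plug F (BVar 0)))) (Lam (Reset (plug F1 (BVar 0))))).
    { constructor; constructor; auto. }
    destruct (sim_open _ _ HG _ _ _ S1 _ _ _ Hl 0) as [r Hr].
    exists (Reset (open b1 (Lam (Reset (plug F1 (BVar 0)))))), r; split.
    + apply sshift; auto.
    + constructor; auto.
  -
    inversion H'; subst.
    + destruct (IHsstep _ _ H2) as [[t1' [p [St Sp]]]|[m' [Hm Sm]]].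
      * left. exists (App t1' b'), (p + m); split; [apply sappL; auto|eapply s_app; eauto].
      * right. exists (m' + m); split; [lia|eapply s_app; eauto].
    + inversion H.
  -
    inversion H'; subst.
    + destruct (sim_val _ _ HG _ _ _ H3 H) as [Vb _].
      destruct (IHsstep _ _ H5) as [[t1' [p [St Sp]]]|[m' [Hm Sm]]].
      * left. exists (App b t1'), (n0 + p); split; [apply sappR; auto|eapply s_app; eauto].
      * right. exists (n0 + m'); split; [lia|eapply s_app; eauto].
    + destruct (IHsstep _ _ H5) as [[t1' [p [St Sp]]]|[m' [Hm Sm]]].
      * left. exists (plug K t1'), (S p); split; [apply sstep_pure; auto|constructor; auto].
      * right. exists (S m'); split; [lia|constructor; auto].
  -
    inversion H'; subst.
    destruct (IHsstep _ _ H2) as [[t1' [p [St Sp]]]|[m' [Hm Sm]]].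
    + left. exists (Reset t1'), p; split; [apply sresetc; auto|constructor; auto].
    + right. exists m'; split; [lia|constructor; auto].
Qed.

Definition RR cF K (a b : term) := (exists n, sim cF K n a b) /\ lc a /\ lc b.

Lemma lc_app_at : forall v y, is_val v -> lc v -> lc (app_at v y).
Proof. intros v y V H; destruct v; simpl in *; try tauto.
  - unfold lc; simpl; auto.
  - unfold lc, open. apply open_lc_at; simpl; auto.
Qed.

Lemma lc_ctx_var : forall E t y, lc_at 0 (plug E t) -> lc_at 0 (plug E (FVar y)).
Proof. intros E t y H. apply lc_plug in H. apply lc_plug; simpl; tauto. Qed.

Lemma stuck : forall cF K, good cF K -> forall n t0 t1, sim cF K n t0 t1 -> lc t0 -> nfform t0 ->
  nfform t1 /\ nf_rel (RR cF K) t0 t1.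
Proof. intros cF K HG n t0 t1 S L0 NF.
  assert (L1 : lc t1) by (apply (proj1 (sim_lc _ _ HG _ _ _ S 0)); auto).
  destruct NF as [V|[[F0 [b0 [P0 E0]]]|[E0 [y [v0 [HE0 [V0 Eq0]]]]]]].
  - destruct (sim_val _ _ HG _ _ _ S V) as [V1 A].
    split; [left; auto|]. left. split; [auto|split; [auto|]].
    intros z _. destruct (A z) as [q Hq].
    split; [eauto|split; apply lc_app_at; auto].
  - subst. destruct (cstuck_sim _ _ HG _ _ _ _ P0 S) as [F1 [b1 [p [P1 [E1 [S1 C1]]]]]]. subst.
    split; [right; left; eauto|]. right; left.
    exists F0, b0, F1, b1; do 4 (split; [auto|]). split.
    + right. split; [auto|split; [auto|]]. intros y _. split; [|split].
      * destruct (C1 0 (FVar y) (FVar y) (s_fvar _ _ y)) as [q Hq]; eauto.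
      * eapply lc_ctx_var; eauto.
      * eapply lc_ctx_var; eauto.
    + intros k _.
      destruct (sim_open _ _ HG _ _ _ S1 0 (FVar k) (FVar k) (s_fvar _ _ k) 0) as [q Hq].
      split; [|split].
      * exists q; constructor; auto.
      * unfold lc in L0; apply lc_plug in L0; simpl in L0. unfold lc; simpl; unfold open; apply open_lc_at; simpl; tauto.
      * unfold lc in L1; apply lc_plug in L1; simpl in L1. unfold lc; simpl; unfold open; apply open_lc_at; simpl; tauto.
  - subst. destruct (ostuck_sim _ _ HG _ _ _ _ _ HE0 V0 S) as [E1 [v1 [p [HE1 [V1 [Eq1 [S1 Q1]]]]]]]. subst.
    split; [right; right; eauto 10|]. right; right.
    exists E0, E1, y, v0, v1; do 4 (split; [auto|]). split.
    + destruct Q1 as [[P0 [P1 C1]]|[E0' [F0 [E1' [F1 [HE0' [P0 [HE1' [P1 [Eq0 [Eq1 [C1 C2]]]]]]]]]]]].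
      * right. split; [auto|split; [auto|]]. intros z _. split; [|split].
        -- destruct (C1 0 (FVar z) (FVar z) (s_fvar _ _ z)) as [q Hq]; eauto.
        -- eapply lc_ctx_var; eauto.
        -- eapply lc_ctx_var; eauto.
      * left. exists E0', F0, E1', F1; do 6 (split; [auto|]). intros z _. split; split; [|split| |split].
        -- destruct (C1 0 (FVar z) (FVar z) (s_fvar _ _ z)) as [q Hq]; eauto.
        -- subst; unfold lc in L0; rewrite plug_comp in L0; eapply lc_ctx_var; eauto.
        -- subst; unfold lc in L1; rewrite plug_comp in L1; eapply lc_ctx_var; eauto.
        -- destruct (C2 0 (FVar z) (FVar z) (s_fvar _ _ z)) as [q Hq]; exists q; constructor; auto.
        -- subst; unfold lc in L0; rewrite plug_comp in L0; apply lc_plug in L0; simpl in L0.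
           unfold lc; simpl; eapply lc_ctx_var; apply L0.
        -- subst; unfold lc in L1; rewrite plug_comp in L1; apply lc_plug in L1; simpl in L1.
           unfold lc; simpl; eapply lc_ctx_var; apply L1.
    + split; [auto|split; [auto|]].
      intros z _. destruct (sim_val _ _ HG _ _ _ S1 V0) as [V1' A].
      destruct (A z) as [q Hq]. split; [eauto|split].
      * unfold lc in *; apply lc_plug in L0; simpl in L0. apply lc_app_at; tauto.
      * unfold lc in *; apply lc_plug in L1; simpl in L1. apply lc_app_at; tauto.
Qed.

Lemma fresh_swap : forall x l1 l2, fresh x (l1 ++ l2) -> fresh x (l2 ++ l1).
Proof. unfold fresh; intros x l1 l2 H C; apply H; apply in_app_iff; apply in_app_iff in C; tauto. Qed.

Lemma val_rel_flip : forall R v0 v1, val_rel R v0 v1 -> val_rel (fun a b => R b a) v1 v0.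
Proof. unfold val_rel; intros R v0 v1 [A [B C]]; repeat split; auto.
  intros x H; apply C; apply fresh_swap; auto. Qed.

Lemma ctx_rel_flip : forall R E0 E1, ctx_rel R E0 E1 -> ctx_rel (fun a b => R b a) E1 E0.
Proof. unfold ctx_rel; intros R E0 E1 [[E0' [F0 [E1' [F1 [A [B [C [D [E [G H]]]]]]]]]]|[A [B C]]].
  - left. exists E1', F1, E0', F0; do 6 (split; [auto|]).
    intros x Hx; destruct (H x); auto. apply fresh_swap; auto.
  - right; split; [auto|split; [auto|]]. intros x Hx; apply C; apply fresh_swap; auto.
Qed.

Lemma nf_rel_flip : forall R n0 n1, nf_rel R n0 n1 -> nf_rel (fun a b => R b a) n1 n0.
Proof. unfold nf_rel; intros R n0 n1 [A|[[F0 [b0 [F1 [b1 [P0 [P1 [E0 [E1 [C D]]]]]]]]]|[E0 [E1 [x [v0 [v1 [H0 [H1 [Q0 [Q1 [C D]]]]]]]]]]]].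
  - left; apply val_rel_flip; auto.
  - right; left. exists F1, b1, F0, b0; do 4 (split; [auto|]). split.
    + apply ctx_rel_flip; auto.
    + intros k Hk; apply D; apply fresh_swap; auto.
  - right; right. exists E1, E0, x, v1, v0; do 4 (split; [auto|]). split.
    + apply ctx_rel_flip; auto.
    + apply val_rel_flip; auto.
Qed.

Lemma rt_step : forall a b c, sstep a b -> clos_refl_trans term step b c -> clos_refl_trans term step a c.
Proof. intros. eapply rt_trans; [apply rt_step; apply step_sstep; eauto|auto]. Qed.

Lemma irr_iff : forall t, irreducible t <-> ~ exists t', sstep t t'.
Proof. unfold irreducible; intros t; split; intros H [t' S]; apply H; exists t'; apply step_sstep; auto. Qed.

Lemma sim_fwd : forall cF K, good cF K -> nf_simulation (RR cF K).
Proof. intros cF K HG t0 t1 HR t0' [Hrt Hirr]. apply clos_rt_rt1n in Hrt.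
  revert t1 HR. induction Hrt; intros t1 [[n S] [L0 L1]].
  - destruct (classify x L0) as [[t' St]|NF].
    + exfalso; apply (proj1 (irr_iff x) Hirr); eauto.
    + destruct (stuck _ _ HG _ _ _ S L0 NF) as [NF1 NR].
      exists t1; split; auto. split; [apply rt_refl|]. apply irr_iff. intros [t' St]; eapply nf_nostep; eauto.
  - apply step_sstep in H.
    destruct (sim_step _ _ HG _ _ H _ _ S) as [[t1' [p [St Sp]]]|[m [Hm Sm]]].
    + destruct (IHHrt Hirr t1') as [t2 [[E2 I2] N2]].
      * split; [eauto|]. split; eapply sstep_lc; eauto.
      * exists t2; split; auto. split; auto. eapply rt_step; eauto.
    + apply IHHrt; auto. split; [eauto|]. split; auto. eapply sstep_lc; eauto.
Qed.

Lemma sim_bwd : forall cF K, good cF K -> nf_simulation (fun a b => RR cF K b a).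
Proof. intros cF K HG t1 t0 HR t1' [Hrt Hirr]. apply clos_rt_rt1n in Hrt.
  cut (exists t0', evalto t0 t0' /\ nf_rel (RR cF K) t0' t1').
  { intros [t0' [E N]]; exists t0'; split; auto; apply nf_rel_flip in N; exact N. }
  revert t0 HR. induction Hrt; intros t0 [[n S] [L0 L1]].
  - revert t0 S L0. induction n as [n IHn] using lt_wf_ind. intros t0 S L0.
    destruct (classify t0 L0) as [[t' St]|NF].
    + destruct (sim_step _ _ HG _ _ St _ _ S) as [[t1' [p [St1 Sp]]]|[m [Hm Sm]]].
      * exfalso; apply (proj1 (irr_iff x) Hirr); eauto.
      * destruct (IHn m Hm t' Sm) as [t2 [[E2 I2] N2]]; [eapply sstep_lc; eauto|].
        exists t2; split; auto. split; auto. eapply rt_step; eauto.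
    + destruct (stuck _ _ HG _ _ _ S L0 NF) as [NF1 NR].
      exists t0; split; auto. split; [apply rt_refl|]. apply irr_iff. intros [t' St]; exact (nf_nostep _ _ NF St).
  - apply step_sstep in H.
    revert t0 S L0. induction n as [n IHn] using lt_wf_ind. intros t0 S L0.
    destruct (classify t0 L0) as [[t' St]|NF].
    + destruct (sim_step _ _ HG _ _ St _ _ S) as [[t1' [p [St1 Sp]]]|[m [Hm Sm]]].
      * rewrite (sstep_det _ _ St1 _ H) in Sp.
        destruct (IHHrt Hirr t') as [t2 [[E2 I2] N2]].
        -- split; [eauto|]. split; eapply sstep_lc; eauto.
        -- exists t2; split; auto. split; auto. eapply rt_step; eauto.
      * destruct (IHn m Hm t' Sm) as [t2 [[E2 I2] N2]]; [eapply sstep_lc; eauto|].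
        exists t2; split; auto. split; auto. eapply rt_step; eauto.
    + destruct (stuck _ _ HG _ _ _ S L0 NF) as [NF1 NR].
      exfalso; exact (nf_nostep _ _ NF1 H).
Qed.

Theorem lemma5 (F : ctx) (t : term) (x : atom) :
  pure F -> lc (plug F (FVar x)) -> lc t -> ~ In x (fv_ctx F) ->
  nf_bisim (App (lam x (plug F (FVar x))) t) (plug F t).
Proof. intros PF LF Lt Hx.
  assert (LK : lcctx 0 F) by (unfold lc in LF; apply lc_plug in LF; tauto).
  assert (HG : good (close x (plug F (FVar x))) F).
  { split; [|split; [auto|split; [auto|]]].
    - unfold close; apply close_lc; auto.
    - intros v. unfold open, close. rewrite close_plug; auto. simpl. rewrite Nat.eqb_refl.
      rewrite open_plug; auto. }
  exists (RR (close x (plug F (FVar x))) F). split; [split; [apply sim_fwd|apply sim_bwd]; auto|].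
  split; [|split].
  - exists 1. unfold lam. apply s_red. apply sim_refl.
  - unfold lc, lam; simpl. split; auto. unfold close; apply close_lc; auto.
  - unfold lc; apply lc_plug; auto.
Qed.
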